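(* Let $G=(S,T,\pi)$ be a two-person win-lose game, with representing matrix $M_G=(\pi(s,t))_{s\in S,t\in T}$. Assume $M_G$ satisfies at least one of: (1) all but finitely many rows contain finitely many $0$ entries; (2) there is a finite $N$ such that all but finitely many rows contain at most $N$ entries equal to $1$; (3) there is a finite $N$ such that all but finitely many columns contain at most $N$ entries equal to $0$; (4) all but finitely many columns contain finitely many $1$ entries. Then $G$ is totally minimax.
   Context: A two-person win-lose game is $G=(S,T,\pi)$ with non-empty sets $S,T$ (arbitrary cardinality) and $\pi:S\times T\to\{0,1\}$; rows of $M_G$ are indexed by $S$ and columns by $T$. $\Delta(X)$ is the set of probability distributions on $X$ with at most countable support; $\pi^{\mathrm{mix}}(\mathbf{p},\mathbf{q})=\sum p_sq_t\pi(s,t)$. A game has the minimax property if $\sup_{\mathbf{p}\in\Delta(S)}\inf_{\mathbf{q}\in\Delta(T)}\pi^{\mathrm{mix}}(\mathbf{p},\mathbf{q})=\inf_{\mathbf{q}\in\Delta(T)}\sup_{\mathbf{p}\in\Delta(S)}\pi^{\mathrm{mix}}(\mathbf{p},\mathbf{q})$. $G$ is totally minimax if every subgame $(S',T',\pi|_{S'\times T'})$ with non-empty $S'\subseteq S$, $T'\subseteq T$ has the minimax property. *)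

(* Defs.v *)
From HB Require Import structures.
From mathcomp Require Import all_boot all_order all_algebra.
From mathcomp Require Import all_classical all_reals all_analysis.
Set Implicit Arguments. Unset Strict Implicit. Unset Printing Implicit Defensive.
Import Order.TTheory GRing.Theory Num.Theory.
Local Open Scope classical_set_scope.
Local Open Scope ring_scope.

(* A win-lose game (S,T,pi) is given by pi : S -> T -> bool. *)
Definition is_mixed (R : realType) (X : choiceType) (A : set X) (p : X -> R) : Prop :=
  [/\ (forall x, 0 <= p x),
      (forall x, p x != 0 -> A x),
      countable [set x | p x != 0] &
      (\esum_(x in [set: X]) (p x)%:E = 1)%E].

Definition mixpay (R : realType) (S T : choiceType) (pi : S -> T -> bool)
  (p : S -> R) (q : T -> R) : \bar R :=
  \esum_(st in [set: S * T]) (p st.1 * q st.2 * (pi st.1 st.2)%:R)%:E.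

Definition minimax_on (R : realType) (S T : choiceType) (pi : S -> T -> bool)
  (A : set S) (B : set T) : Prop :=
  ereal_sup [set ereal_inf [set mixpay pi p q | q in [set q : T -> R | is_mixed B q]]
            | p in [set p : S -> R | is_mixed A p]]
  = ereal_inf [set ereal_sup [set mixpay pi p q | p in [set p : S -> R | is_mixed A p]]
            | q in [set q : T -> R | is_mixed B q]].

Definition totally_minimax (R : realType) (S T : choiceType) (pi : S -> T -> bool) : Prop :=
  forall (A : set S) (B : set T), A !=set0 -> B !=set0 -> minimax_on R pi A B.

(* Main.v *)
Require Import Defs.
From HB Require Import structures.
From mathcomp Require Import all_boot all_order all_algebra.
From mathcomp Require Import all_classical all_reals all_analysis.
From mathcomp Require Import ring lra.

Module Aux.
Set Implicit Arguments. Unset Strict Implicit. Unset Printing Implicit Defensive.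
Import Order.TTheory GRing.Theory Num.Theory.
Local Open Scope classical_set_scope.
Local Open Scope ring_scope.

Section Regret.
Variable R : realFieldType.
Variable n : nat.
Hypothesis n_gt0 : (0 < n)%N.
Variable adv : (nat -> R) -> (nat -> R).
Hypothesis adv01 : forall w i, 0 <= adv w i <= 1.

Definition posr (x : R) := Num.max x 0.
Definition Spos (a : nat -> R) := \sum_(i < n) posr (a i).
Definition wts (a : nat -> R) (i : nat) : R :=
  if 0 < Spos a then posr (a i) / Spos a else n%:R^-1.
Definition dotw (w u : nat -> R) := \sum_(i < n) w i * u i.

Fixpoint RG (k : nat) : nat -> R :=
  if k is k'.+1 then
    let w := wts (RG k') in
    fun i => RG k' i + adv w i - dotw w (adv w)
  else fun _ => 0.

Lemma posr_ge0 x : 0 <= posr x.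
Proof. by rewrite /posr le_max lexx orbT. Qed.

Lemma posr_ge x : x <= posr x.
Proof. by rewrite /posr le_max lexx. Qed.

Lemma posr_sq a r : posr (a + r) ^+ 2 <= (posr a + r) ^+ 2.
Proof.
rewrite /posr !maxEle; case: ifP => h1; case: ifP => h2.
- by rewrite expr0n /=; exact: sqr_ge0.
- by rewrite expr0n /=; exact: sqr_ge0.
- have h1' : 0 < a + r by rewrite ltNge h1.
  nra.
- have h1' : 0 < a + r by rewrite ltNge h1.
  have h2' : 0 < a by rewrite ltNge h2.
  nra.
Qed.

Lemma Spos_ge0 (a : nat -> R) : 0 <= Spos a.
Proof. by apply: sumr_ge0 => i _; exact: posr_ge0. Qed.

Lemma wts_ge0 (a : nat -> R) i : 0 <= wts a i.
Proof.
rewrite /wts; case: ifP => h; last by rewrite invr_ge0 ler0n.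
by rewrite divr_ge0 // ?posr_ge0 // ltW.
Qed.

Lemma wts_sum (a : nat -> R) : \sum_(i < n) wts a i = 1.
Proof.
have [h|h] := boolP (0 < Spos a).
  under eq_bigr do rewrite /wts h.
  by rewrite -mulr_suml -/(Spos a) divff // gt_eqF.
under eq_bigr do rewrite /wts (negbTE h).
rewrite sumr_const card_ord -[X in X = 1]mulr_natr mulVf //.
by rewrite pnatr_eq0 -lt0n.
Qed.

Lemma dotw_01 (a u : nat -> R) : (forall i, 0 <= u i <= 1) -> 0 <= dotw (wts a) u <= 1.
Proof.
move=> hu; apply/andP; split.
  apply: sumr_ge0 => i _; apply: mulr_ge0; first exact: wts_ge0.
  by case/andP: (hu i).
rewrite -(wts_sum a) /dotw; apply: ler_sum => i _.
rewrite -[leRHS]mulr1; apply: ler_wpM2l; first exact: wts_ge0.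
by case/andP: (hu i).
Qed.

Lemma cross0 (a u : nat -> R) :
  \sum_(i < n) posr (a i) * (u i - dotw (wts a) u) = 0.
Proof.
under eq_bigr do rewrite mulrBr.
rewrite sumrB -mulr_suml -/(Spos a) /dotw.
have [h|h] := boolP (0 < Spos a).
  have -> : \sum_(i < n) wts a i * u i = (\sum_(i < n) posr (a i) * u i) / Spos a.
    rewrite mulr_suml; apply: eq_bigr => i _; rewrite /wts h.
    by rewrite mulrAC.
  by rewrite mulrC divfK ?subrr // gt_eqF.
have S0 : Spos a = 0 by apply/eqP; rewrite eq_le Spos_ge0 andbT leNgt.
have P0 i : (i < n)%N -> posr (a i) = 0.
  move=> lt; apply/eqP; move/eqP: S0; rewrite /Spos psumr_eq0; last first.
    by move=> j _; exact: posr_ge0.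
  by move/allP => /(_ (Ordinal lt) (mem_index_enum _)).
rewrite S0 mul0r subr0; apply: big1 => i _; by rewrite P0 ?mul0r.
Qed.

Lemma RG_bound k : \sum_(i < n) posr (RG k i) ^+ 2 <= n%:R * k%:R.
Proof.
elim: k => [|k IH] /=.
  by rewrite mulr0; under eq_bigr do rewrite /posr maxxx expr0n; rewrite big1.
set w := wts (RG k); set u := adv w; set d := dotw w u.
have hu : forall i, 0 <= u i <= 1 by move=> i; exact: adv01.
have hd : 0 <= d <= 1 by exact: dotw_01.
apply: (@le_trans _ _ (\sum_(i < n) (posr (RG k i) + (u i - d)) ^+ 2)).
  apply: ler_sum => i _; rewrite -addrA; exact: posr_sq.
under eq_bigr do rewrite sqrrD.
rewrite big_split big_split /=.
have -> : \sum_(i < n) posr (RG k i) * (u i - d) *+ 2 = 0.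
  by rewrite sumrMnl cross0 mul0rn.
have hB : \sum_(i < n) (u i - d) ^+ 2 <= n%:R.
  have -> : (n%:R : R) = \sum_(i < n) 1 by rewrite sumr_const card_ord.
  apply: ler_sum => i _.
  have := hu i; move: hd => /andP[? ?] /andP[? ?].
  rewrite -subr_ge0; nra.
rewrite addr0 [k.+1%:R]mulrS mulrDr mulr1 addrC; exact: lerD.
Qed.

Definition W k := wts (RG k).
Definition U k := adv (W k).

Lemma RG_sum k i : RG k i = \sum_(j < k) (U j i - dotw (W j) (U j)).
Proof.
elim: k => [|k IH] /=; first by rewrite big_ord0.
by rewrite big_ord_recr /= -IH /U /W addrA.
Qed.

Lemma regret_bound k i (eta : R) : (i < n)%N -> 0 < eta ->
  n%:R <= eta ^+ 2 * k%:R ->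
  \sum_(j < k) U j i - \sum_(j < k) dotw (W j) (U j) <= eta * k%:R.
Proof.
move=> lt_in eta0 hk.
rewrite -sumrB -RG_sum.
have p0 := posr_ge0 (RG k i).
have hp : posr (RG k i) ^+ 2 <= eta ^+ 2 * k%:R ^+ 2.
  apply: (le_trans _ (_ : n%:R * k%:R <= _)).
    apply: le_trans (RG_bound k).
    rewrite (bigD1 (Ordinal lt_in)) //= lerDl.
    by apply: sumr_ge0 => j _; exact: sqr_ge0.
  have k0 : 0 <= (k%:R : R) by exact: ler0n.
  rewrite expr2 mulrA; apply: ler_wpM2r => //.
apply: le_trans (posr_ge _) _.
rewrite -exprMn in hp.
have e0 : 0 <= eta * k%:R by apply: mulr_ge0; [exact: ltW | exact: ler0n].
by rewrite -(ler_pXn2r (_ : (0 < 2)%N)) ?nnegrE.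
Qed.

End Regret.


Section Mix.
Variable R : realType.

Definition wsum (Z : Type) (zs : seq (R * Z)) := \sum_(p <- zs) p.1.
Definition validm (Z : choiceType) (C : set Z) (zs : seq (R * Z)) :=
  (forall p, p \in zs -> 0 <= p.1 /\ C p.2) /\ wsum zs = 1.

Variables (X Y : choiceType) (g : X -> Y -> bool).

Definition rpay (xs : seq (R * X)) (y : Y) := \sum_(p <- xs) p.1 * (g p.2 y)%:R.
Definition cpay (x : X) (ys : seq (R * Y)) := \sum_(p <- ys) p.1 * (g x p.2)%:R.

Variables (A : set X) (B : set Y).

Definition Plow (c : R) := forall xs, validm A xs -> forall d, 0 < d ->
  exists y, B y /\ rpay xs y <= c + d.
Definition Pup (c : R) := forall ys, validm B ys -> forall d, 0 < d ->
  exists x, A x /\ c - d <= cpay x ys.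
Definition UCert (c : R) := forall e, 0 < e ->
  exists ys, validm B ys /\ forall x, A x -> cpay x ys <= c + e.
Definition LCert (c : R) := forall e, 0 < e ->
  exists xs, validm A xs /\ forall y, B y -> c - e <= rpay xs y.

Lemma rpay_ge0 xs y : validm A xs -> 0 <= rpay xs y.
Proof.
move=> [h _]; rewrite /rpay big_seq_cond; apply: sumr_ge0 => p /andP[pin _].
by apply: mulr_ge0; [case: (h p pin) | exact: ler0n].
Qed.

Lemma rpay_le1 xs y : validm A xs -> rpay xs y <= 1.
Proof.
move=> [h <-]; rewrite /rpay /wsum big_seq_cond [leRHS]big_seq_cond.
apply: ler_sum => p /andP[pin _]; rewrite -[leRHS]mulr1.
by apply: ler_wpM2l; [case: (h p pin) | case: (g _ _)].
Qed.

Lemma cpay_ge0 x ys : validm B ys -> 0 <= cpay x ys.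
Proof.
move=> [h _]; rewrite /cpay big_seq_cond; apply: sumr_ge0 => p /andP[pin _].
by apply: mulr_ge0; [case: (h p pin) | exact: ler0n].
Qed.

Lemma cpay_le1 x ys : validm B ys -> cpay x ys <= 1.
Proof.
move=> [h <-]; rewrite /cpay /wsum big_seq_cond [leRHS]big_seq_cond.
apply: ler_sum => p /andP[pin _]; rewrite -[leRHS]mulr1.
by apply: ler_wpM2l; [case: (h p pin) | case: (g _ _)].
Qed.

End Mix.

Lemma sum_iota (R : realType) k (F : nat -> R) :
  \sum_(j <- iota 0 k) F j = \sum_(j < k) F j.
Proof. by rewrite -(big_mkord xpredT) /index_iota subn0. Qed.


Section Avg.
Variable R : realType.
Definition scalem (Z : Type) (a : R) (zs : seq (R * Z)) := [seq (a * p.1, p.2) | p <- zs].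
Definition avgm (Z : Type) (k : nat) (f : nat -> seq (R * Z)) :=
  flatten [seq scalem (k%:R^-1) (f j) | j <- iota 0 k].

Lemma sum_avgm (Z : Type) k (f : nat -> seq (R * Z)) (G : Z -> R) :
  \sum_(p <- avgm k f) p.1 * G p.2 = k%:R^-1 * \sum_(j < k) \sum_(p <- f j) p.1 * G p.2.
Proof.
rewrite /avgm big_flatten /= big_map sum_iota mulr_sumr; apply: eq_bigr => j _.
rewrite /scalem big_map mulr_sumr; apply: eq_bigr => p _ /=.
by rewrite mulrA.
Qed.

Lemma wsum_avgm (Z : Type) k (f : nat -> seq (R * Z)) :
  (0 < k)%N -> (forall j, wsum (f j) = 1) -> wsum (avgm k f) = 1.
Proof.
move=> k0 h; have := sum_avgm k f (fun _ => 1).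
under eq_bigr do rewrite mulr1.
under [X in _ = _ * X]eq_bigr do under eq_bigr do rewrite mulr1.
rewrite /wsum => ->.
under eq_bigr do rewrite -/(wsum _) h.
by rewrite sumr_const card_ord -[X in _ * X]mulr_natr mul1r mulVf // pnatr_eq0 -lt0n.
Qed.

Lemma validm_avgm (Z : choiceType) (C : set Z) k (f : nat -> seq (R * Z)) :
  (0 < k)%N -> (forall j, validm C (f j)) -> validm C (avgm k f).
Proof.
move=> k0 h; split; last by apply: wsum_avgm => // j; case: (h j).
move=> p /flattenP [zs /mapP [j _ ->]] /mapP [q qin ->] /=.
have [hq _] := h j; have [q0 Cq] := hq q qin.
split => //; apply: mulr_ge0 => //; by rewrite invr_ge0 ler0n.
Qed.

End Avg.

Section T1.
Variables (R : realType) (X Y : choiceType) (g : X -> Y -> bool).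
Variables (A : set X) (B : set Y) (rs : seq X) (x0 : X).
Hypothesis rsA : forall r, r \in rs -> A r.
Hypothesis B0 : B !=set0.

Let n := size rs.
Let rep i := nth x0 rs i.
Definition rpw (w : nat -> R) y := \sum_(i < size rs) w i * (g (nth x0 rs i) y)%:R.

Lemma br_ex (w : nat -> R) (d : R) : 0 < d ->
  exists y, B y /\ forall y', B y' -> rpw w y <= rpw w y' + d.
Proof.
move=> d0; set E := [set rpw w y | y in B].
have hE : has_inf E.
  split; first by case: B0 => y By; exists (rpw w y); exists y.
  exists (- \sum_(i < size rs) `|w i|) => _ [y By <-].
  rewrite /rpw -sumrN; apply: ler_sum => i _.
  case: (g _ _); rewrite ?mulr1 ?mulr0.
    by rewrite lerNl -normrN ler_norm.
  by rewrite oppr_le0.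
have [e [y By <-] he] := inf_adherent d0 hE.
exists y; split => // y' By'.
apply: (le_trans (ltW he)); rewrite lerD2r.
by apply: ge_inf => //; [case: hE | exists y'].
Qed.

Lemma dyn (d eta : R) : 0 < d -> 0 < eta -> (0 < size rs)%N ->
  exists (k : nat) (y : nat -> Y) (W : nat -> nat -> R), (0 < k)%N /\ [/\
    (forall j, B (y j)),
    (forall j y', B y' -> rpw (W j) (y j) <= rpw (W j) y' + d),
    (forall j i, 0 <= W j i), (forall j, \sum_(i < size rs) W j i = 1) &
    (forall i, (i < size rs)%N ->
       \sum_(j < k) (g (nth x0 rs i) (y j))%:R - \sum_(j < k) rpw (W j) (y j)
         <= eta * k%:R)].
Proof.
move=> d0 eta0 n0.
have brf : forall w : nat -> R,
    {y | B y /\ forall y', B y' -> rpw w y <= rpw w y' + d}.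
  by move=> w; apply: cid; exact: br_ex.
pose adv (w : nat -> R) (i : nat) : R := (g (nth x0 rs i) (proj1_sig (brf w)))%:R.
have adv01 : forall w i, 0 <= adv w i <= 1.
  by move=> w i; rewrite /adv; case: (g _ _); rewrite ?lexx ?ler01.
pose k := Num.Def.archi_bound ((size rs)%:R / eta ^+ 2).
have hk : (size rs)%:R / eta ^+ 2 < k%:R.
  apply: archi_boundP; apply: divr_ge0; [exact: ler0n | exact: sqr_ge0].
have k0 : (0 < k)%N.
  rewrite -(ltr_nat R); apply: le_lt_trans hk.
  by apply: divr_ge0; [exact: ler0n | exact: sqr_ge0].
exists k, (fun j => proj1_sig (brf (W (size rs) adv j))), (W (size rs) adv).
split => //; split.
- by move=> j; case: (proj2_sig (brf (W (size rs) adv j))).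
- by move=> j; case: (proj2_sig (brf (W (size rs) adv j))).
- by move=> j i; exact: wts_ge0.
- by move=> j; exact: wts_sum.
move=> i lt_i.
have := @regret_bound R (size rs) n0 adv adv01 k i eta lt_i eta0.
have e2 : 0 < eta ^+ 2 by exact: exprn_gt0.
have hk' : (size rs)%:R <= eta ^+ 2 * k%:R.
  have -> : (size rs)%:R = eta ^+ 2 * ((size rs)%:R / eta ^+ 2).
    by field; rewrite gt_eqF.
  by apply: ler_wpM2l; [exact: ltW | exact: ltW].
move=> /(_ hk'); apply: le_trans; apply: lerB.
  by apply: ler_sum => j _; rewrite /U.
rewrite le_eqVlt; apply/orP; left; apply/eqP; apply: eq_bigr => j _.
by rewrite /dotw /rpw /U.
Qed.


Definition mw (w : nat -> R) := [seq (w i, nth x0 rs i) | i <- iota 0 (size rs)].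

Lemma rpay_mw (w : nat -> R) y : rpay g (mw w) y = rpw w y.
Proof. by rewrite /rpay /mw big_map sum_iota. Qed.

Lemma validm_mw (w : nat -> R) : (forall i, 0 <= w i) -> \sum_(i < size rs) w i = 1 ->
  validm A (mw w).
Proof.
move=> w0 w1; split; last by rewrite /wsum /mw big_map sum_iota.
move=> p /mapP [i]; rewrite mem_iota add0n => /andP[_ lt_i] -> /=.
by split => //; apply: rsA; exact: mem_nth.
Qed.

Definition pure (Z : Type) (z : Z) : seq (R * Z) := [:: (1, z)].

Lemma validm_pure (Z : choiceType) (C : set Z) z : C z -> validm C (pure z).
Proof.
move=> Cz; split; last by rewrite /wsum big_seq1.
by move=> p; rewrite inE => /eqP -> /=; split.
Qed.

Lemma cpay_pure x y : cpay g x (pure y) = (g x y)%:R.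
Proof. by rewrite /cpay big_seq1 mul1r. Qed.

Lemma rpay_pure x y : rpay g (pure x) y = (g x y)%:R.
Proof. by rewrite /rpay big_seq1 mul1r. Qed.

Hypothesis pat : forall x, A x -> exists2 r, r \in rs & forall y, B y -> g x y = g r y.
Hypothesis A0 : A !=set0.

Lemma size_rs : (0 < size rs)%N.
Proof.
case: A0 => x Ax; have [r rin _] := pat Ax.
by case: rs rin.
Qed.

Lemma T1i (c : R) : Plow g A B c -> UCert g A B c.
Proof.
move=> hP e e0.
have e3 : 0 < e / 3 by rewrite divr_gt0.
have [k [y [W [k0 [By hbr W0 W1 hreg]]]]] := dyn e3 e3 size_rs.
exists (avgm k (fun j => pure (y j))); split.
  by apply: validm_avgm => // j; apply: validm_pure.
move=> x Ax; have [r rin hr] := pat Ax.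
rewrite /cpay (sum_avgm _ _ (fun z => (g x z)%:R)).
under eq_bigr do rewrite -/(cpay _ _ _) cpay_pure hr //.
have := hreg (index r rs); rewrite index_mem nth_index // => /(_ rin) h.
have hD : forall j, rpw (W j) (y j) <= c + e / 3 + e / 3.
  move=> j; have [y' [By' hy']] := hP _ (validm_mw (W0 j) (W1 j)) _ e3.
  rewrite rpay_mw in hy'; apply: le_trans (hbr j y' By') _.
  by rewrite lerD2r.
have hS : \sum_(j < k) rpw (W j) (y j) <= k%:R * (c + e / 3 + e / 3).
  rewrite (_ : k%:R * _ = \sum_(j < k) (c + e / 3 + e / 3)); last first.
    by rewrite sumr_const card_ord mulr_natl.
  by apply: ler_sum => j _.
have kp : 0 < (k%:R : R) by rewrite ltr0n.
rewrite ler_pdivrMl //.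
have -> : k%:R * (c + e) = k%:R * (c + e / 3 + e / 3) + e / 3 * k%:R by field.
lra.
Qed.

Lemma T1ii (c : R) : Pup g A B c -> LCert g A B c.
Proof.
move=> hP e e0.
have e3 : 0 < e / 3 by rewrite divr_gt0.
have [k [y [W [k0 [By hbr W0 W1 hreg]]]]] := dyn e3 e3 size_rs.
exists (avgm k (fun j => mw (W j))); split.
  by apply: validm_avgm => // j; apply: validm_mw.
move=> y0 By0.
rewrite /rpay (sum_avgm _ _ (fun z => (g z y0)%:R)).
under eq_bigr do rewrite -/(rpay _ _ _) rpay_mw.
have [x [Ax hx]] := hP (avgm k (fun j => pure (y j)))
  (validm_avgm k0 (fun j => validm_pure (By j))) _ e3.
have [r rin hr] := pat Ax.
move: hx; rewrite /cpay (sum_avgm _ _ (fun z => (g x z)%:R)).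
have -> : \sum_(j < k) \sum_(p <- pure (y j)) p.1 * (g x p.2)%:R =
    \sum_(j < k) (g r (y j))%:R.
  by apply: eq_bigr => j _; rewrite big_seq1 mul1r (hr _ (By j)).
have := hreg (index r rs); rewrite index_mem nth_index // => /(_ rin) h hx.
have hS : \sum_(j < k) rpw (W j) (y j) - k%:R * (e / 3) <= \sum_(j < k) rpw (W j) y0.
  rewrite (_ : k%:R * _ = \sum_(j < k) (e / 3)); last first.
    by rewrite sumr_const card_ord mulr_natl.
  rewrite -sumrB; apply: ler_sum => j _.
  by rewrite lerBlDr; apply: hbr.
have kp : 0 < (k%:R : R) by rewrite ltr0n.
rewrite ler_pdivlMl //.
move: hx; rewrite ler_pdivlMl // => hx.
have -> : k%:R * (c - e) = k%:R * (c - e / 3) - e / 3 * k%:R - k%:R * (e / 3) by field.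
lra.
Qed.

End T1.

Section Patterns.
Variables (X Y : choiceType) (g h : X -> Y -> bool) (A : set X) (B : set Y).
Variables (es : seq X) (fs : seq Y) (H : seq bool -> Y -> bool).
Hypothesis hH : forall x y, x \notin es -> B y -> h x y = H [seq g x f | f <- fs] y.

Lemma fin_patterns (a0 : X) : A a0 ->
  exists rs : seq X, (forall r, r \in rs -> A r) /\
    (forall x, A x -> exists2 r, r \in rs & forall y, B y -> h x y = h r y).
Proof.
move=> Aa0.
pose P (t : (size fs).-tuple bool) :=
  [set x | A x /\ x \notin es /\ [seq g x f | f <- fs] = tval t].
pose pick t := xget a0 (P t).
exists ([seq x <- es | `[< A x >]] ++ [seq pick t | t <- enum {: (size fs).-tuple bool}]).
split.
  move=> r; rewrite mem_cat => /orP [].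
    by rewrite mem_filter => /andP [/asboolP].
  move=> /mapP [t _ ->]; rewrite /pick.
  by case: xgetP => [y _ [Ay _] | _].
move=> x Ax; case: (boolP (x \in es)) => xes.
  exists x => //; by rewrite mem_cat mem_filter xes andbT; apply/orP; left; apply/asboolP.
pose t := map_tuple (g x) (in_tuple fs).
have Pt : P t x by split => //.
have := xgetI a0 Pt; rewrite -/(pick t) => -[_ [pes psig]].
exists (pick t).
  by rewrite mem_cat; apply/orP; right; apply/mapP; exists t => //; rewrite mem_enum.
by move=> y By; rewrite hH // hH // psig.
Qed.

End Patterns.

Lemma telescope (R : realType) (X : eqType) (Es : nat -> seq X) (x : X) K :
  Es 0 = [::] -> (forall k, x \in Es k -> x \in Es k.+1) ->
  \sum_(k < K) ((x \notin Es k) && (x \in Es k.+1))%:R = (x \in Es K)%:R :> R.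
Proof.
move=> E0 mono; elim: K => [|K IH]; first by rewrite big_ord0 E0.
rewrite big_ord_recr /= IH.
case: (boolP (x \in Es K)) => h /=.
  by rewrite (mono _ h) /= addr0.
by rewrite add0r.
Qed.

Section Core1.
Variables (R : realType) (X Y : choiceType) (g : X -> Y -> bool).
Variables (A : set X) (B : set Y).

Lemma Plow_mono (h : X -> Y -> bool) (c : R) :
  (forall x y, A x -> B y -> h x y -> g x y) -> Plow g A B c -> Plow h A B c.
Proof.
move=> hg hP xs vxs d d0; have [y [By hy]] := hP xs vxs d d0.
exists y; split => //; apply: le_trans hy.
rewrite /rpay !big_seq; apply: ler_sum => p pin.
case: vxs => /(_ p pin) [p0 Ap] _; apply: ler_wpM2l => //.
by case E: (h p.2 y) => //; rewrite (hg _ _ Ap By E).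
Qed.

Lemma coreI (fs : seq Y) (c : R) : A !=set0 -> B !=set0 -> 0 <= c ->
  (forall y, B y -> y \notin fs -> finite_set [set x | A x /\ g x y]) ->
  Plow g A B c -> UCert g A B c.
Proof.
move=> A0 B0 c0 fin hP e e0.
have onesf : forall y, {l : seq X | B y -> y \notin fs ->
    forall x, A x -> g x y -> x \in l}.
  move=> y; apply: cid.
  case: (pselect (B y /\ y \notin fs)) => [[By yfs]|nb]; last first.
    by exists [::] => By yfs; exfalso; apply: nb.
  have /finite_seqP [l hl] := fin y By yfs.
  exists l => _ _ x Ax gxy.
  have : [set x | A x /\ g x y] x by [].
  by rewrite hl.
pose ones y := proj1_sig (onesf y).
pose gk (es : seq X) x y := g x y && ((x \in es) || (y \in fs)).
have e2 : 0 < e / 2 by rewrite divr_gt0.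
case: (A0) => a0 Aa0.
have stepf : forall es : seq X, {ys | validm B ys /\
    forall x, A x -> cpay (gk es) x ys <= c + e / 2}.
  move=> es; apply: cid.
  have hH : forall x y, x \notin es -> B y -> gk es x y =
      (fun s y => (y \in fs) && nth false s (index y fs)) [seq g x f | f <- fs] y.
    move=> x y xes By /=.
    rewrite /gk (negbTE xes) /=.
    case: (boolP (y \in fs)) => yfs; rewrite ?andbF //=.
    by rewrite (nth_map y) ?index_mem // nth_index // andbT.
  have [rs [rsA hrs]] := @fin_patterns X Y g (gk es) A B es fs (fun s y => (y \in fs) && nth false s (index y fs)) hH a0 Aa0.
  apply: (@T1i R X Y (gk es) A B rs a0 rsA B0 hrs A0 c _ (e / 2) e2).
  by apply: Plow_mono hP => x y _ _ /andP[].
pose fix Es k := if k is k'.+1 then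
  Es k' ++ flatten [seq ones p.2 | p <- proj1_sig (stepf (Es k'))] else [::].
pose ys k := proj1_sig (stepf (Es k)).
have e2' : 0 <= 2 / e by rewrite divr_ge0 // ltW.
pose K := Num.Def.archi_bound (2 / e).
have hK : 2 / e < K%:R by apply: archi_boundP.
have K0 : (0 < K)%N by rewrite -(ltr_nat R); apply: le_lt_trans hK.
exists (avgm K ys); split.
  by apply: validm_avgm => // k; case: (proj2_sig (stepf (Es k))).
move=> x Ax.
rewrite /cpay (sum_avgm _ _ (fun z => (g x z)%:R)).
have hk : forall k, \sum_(p <- ys k) p.1 * (g x p.2)%:R <=
    c + e / 2 + ((x \notin Es k) && (x \in Es k.+1))%:R.
  move=> k; have [vy hy] := proj2_sig (stepf (Es k)).
  rewrite -/(ys k) in vy hy.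
  case: (boolP (x \in Es k)) => xin /=.
    rewrite addr0; apply: le_trans (hy x Ax); rewrite le_eqVlt; apply/orP; left.
    apply/eqP; apply: eq_bigr => p _; by rewrite /gk xin andbT.
  case: (boolP (x \in Es k ++ flatten [seq ones p.2 | p <- ys k])) => xin' /=.
    have := cpay_le1 g x vy; rewrite /cpay => h1; lra.
  rewrite addr0; apply: le_trans (hy x Ax); rewrite le_eqVlt; apply/orP; left.
  apply/eqP; rewrite /cpay !big_seq; apply: eq_bigr => p pin; congr (_ * _%:R).
  rewrite /gk (negbTE xin) /=.
  case: (boolP (p.2 \in fs)) => pfs; rewrite ?andbT // andbF.
  case gxp: (g x p.2) => //; exfalso; move/negP: xin'; apply.
  rewrite mem_cat; apply/orP; right; apply/flattenP.
  exists (ones p.2); first by apply/mapP; exists p.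
  case: vy => /(_ p pin) [_ Bp] _.
  exact: (proj2_sig (onesf p.2) Bp pfs x Ax gxp).
have hsum : \sum_(k < K) \sum_(p <- ys k) p.1 * (g x p.2)%:R <=
    K%:R * (c + e / 2) + 1.
  apply: (@le_trans _ _ (\sum_(k < K) (c + e / 2 + ((x \notin Es k) && (x \in Es k.+1))%:R))).
    by apply: ler_sum => k _; exact: hk.
  rewrite big_split /= telescope //; last first.
    by move=> k xk /=; rewrite mem_cat xk.
  rewrite sumr_const card_ord mulr_natl lerD2l.
  by case: (x \in Es K).
have Kp : 0 < (K%:R : R) by rewrite ltr0n.
rewrite ler_pdivrMl //; apply: le_trans hsum _.
have : 2 < e * K%:R by rewrite -ltr_pdivrMl // mulrC.
nra.
Qed.

End Core1.

Lemma sum_count (R : realType) (s : seq nat) (b : pred nat) :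
  \sum_(k <- s) (b k)%:R = (count b s)%:R :> R.
Proof.
elim: s => [|k s IH]; first by rewrite big_nil.
by rewrite big_cons IH /= natrD.
Qed.

Section Core2.
Variables (R : realType) (X Y : choiceType) (g : X -> Y -> bool).
Variables (A : set X) (B : set Y).

Lemma Pup_mono (h : X -> Y -> bool) (c : R) :
  (forall x y, A x -> B y -> g x y -> h x y) -> Pup g A B c -> Pup h A B c.
Proof.
move=> hg hP ys vys d d0; have [x [Ax hx]] := hP ys vys d d0.
exists x; split => //; apply: le_trans hx _.
rewrite /cpay !big_seq; apply: ler_sum => p pin.
case: vys => /(_ p pin) [p0 Bp] _; apply: ler_wpM2l => //.
by case E: (g x p.2) => //; rewrite (hg _ _ Ax Bp E).
Qed.

Lemma coreII (fs : seq Y) (N : nat) (c : R) : A !=set0 -> B !=set0 -> c <= 1 ->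
  (forall y, B y -> y \notin fs -> forall zs : seq X, uniq zs ->
      (forall z, z \in zs -> A z /\ g z y = false) -> (size zs <= N)%N) ->
  Pup g A B c -> LCert g A B c.
Proof.
move=> A0 B0 c1 hN hP e e0.
pose gk (es : seq X) x y := g x y || ((y \notin fs) && (x \notin es)).
have e2 : 0 < e / 2 by rewrite divr_gt0.
case: (A0) => a0 Aa0.
have stepf : forall es : seq X, {xs | validm A xs /\
    forall y, B y -> c - e / 2 <= rpay (gk es) xs y}.
  move=> es; apply: cid.
  have hH : forall x y, x \notin es -> B y -> gk es x y =
      (fun s y => (y \notin fs) || nth false s (index y fs)) [seq g x f | f <- fs] y.
    move=> x y xes By /=.
    rewrite /gk xes andbT.
    case: (boolP (y \in fs)) => yfs /=; rewrite ?orbT //= orbF.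
    by rewrite (nth_map y) ?index_mem // nth_index.
  have [rs [rsA hrs]] := @fin_patterns X Y g (gk es) A B es fs (fun s y => (y \notin fs) || nth false s (index y fs)) hH a0 Aa0.
  apply: (@T1ii R X Y (gk es) A B rs a0 rsA B0 hrs A0 c _ (e / 2) e2).
  by apply: Pup_mono hP => x y _ _ gxy; rewrite /gk gxy.
pose fix Es k := if k is k'.+1 then
  Es k' ++ map snd (proj1_sig (stepf (Es k'))) else [::].
pose xs k := proj1_sig (stepf (Es k)).
have Emono : forall k k' x, (k <= k')%N -> x \in Es k -> x \in Es k'.
  move=> k k' x /subnK <-; elim: (k' - k)%N => [|m IH] // xk.
  by rewrite addSn /= mem_cat IH.
have e2' : 0 <= 2 * N%:R / e by apply: divr_ge0; [apply: mulr_ge0; exact: ler0n | exact: ltW].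
pose K := Num.Def.archi_bound (2 * N%:R / e).
have hK : 2 * N%:R / e < K%:R by apply: archi_boundP.
have K0 : (0 < K)%N by rewrite -(ltr_nat R); apply: le_lt_trans hK.
exists (avgm K xs); split.
  by apply: validm_avgm => // k; case: (proj2_sig (stepf (Es k))).
move=> y By.
rewrite /rpay (sum_avgm _ _ (fun z => (g z y)%:R)).
pose b k := (y \notin fs) && has (fun x => (x \notin Es k) && ~~ g x y) (map snd (xs k)).
have hk : forall k, c - e / 2 - (b k)%:R <= \sum_(p <- xs k) p.1 * (g p.2 y)%:R.
  move=> k; have [vx hx] := proj2_sig (stepf (Es k)).
  rewrite -/(xs k) in vx hx.
  case: (boolP (b k)) => bk /=.
    have := rpay_ge0 g y vx; rewrite /rpay => h0; lra.
  rewrite subr0; apply: le_trans (hx y By) _; rewrite le_eqVlt; apply/orP; left.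
  apply/eqP; rewrite /rpay !big_seq; apply: eq_bigr => p pin; congr (_ * _%:R).
  rewrite /gk; case gp: (g p.2 y) => //=.
  case E: ((y \notin fs) && (p.2 \notin Es k)) => //.
  move/andP: E => [yfs pes]; exfalso; move/negP: bk; apply.
  rewrite /b yfs /=; apply/hasP; exists p.2; first by apply/mapP; exists p.
  by rewrite pes gp.
have hb : \sum_(k < K) (b k)%:R <= N%:R :> R.
  rewrite -(sum_iota K (fun k => (b k)%:R)) sum_count -size_filter ler_nat.
  case: (boolP (y \in fs)) => yfs.
    have bF : forall k, b k = false by move=> k; rewrite /b yfs.
    suff -> : [seq k <- iota 0 K | b k] = [::] by [].
    by elim: (iota 0 K) => //= k s ->; rewrite bF.
  pose z k := nth a0 (map snd (xs k))
     (find (fun x => (x \notin Es k) && ~~ g x y) (map snd (xs k))).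
  have hz : forall k, b k -> [/\ z k \in map snd (xs k), z k \notin Es k & g (z k) y = false].
    move=> k /andP [_ hk']; rewrite /z.
    have hf := nth_find a0 hk'; move: hf => /andP [h1 h2].
    split => //; [by rewrite mem_nth // -has_find | exact: negbTE].
  rewrite -(size_map z); apply: (hN y By yfs).
    rewrite map_inj_in_uniq ?filter_uniq ?iota_uniq //.
    move=> k1 k2; rewrite !mem_filter => /andP [b1 _] /andP [b2 _] ez.
    have [z1 n1 _] := hz _ b1; have [z2 n2 _] := hz _ b2.
    have in1 : z k1 \in Es k1.+1 by rewrite /= mem_cat z1 orbT.
    have in2 : z k2 \in Es k2.+1 by rewrite /= mem_cat z2 orbT.
    case: (ltngtP k1 k2) => // lt.
      by move: n2; rewrite -ez (Emono _ _ _ lt in1).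
    by move: n1; rewrite ez (Emono _ _ _ lt in2).
  move=> zz /mapP [k]; rewrite mem_filter => /andP [bk _] ->.
  have [zin _ gz] := hz _ bk; split => //.
  have [vx _] := proj2_sig (stepf (Es k)).
  move: zin => /mapP [p pin ->]; by case: vx => /(_ p pin) [].
have hsum : K%:R * (c - e / 2) - N%:R <= \sum_(k < K) \sum_(p <- xs k) p.1 * (g p.2 y)%:R.
  apply: (@le_trans _ _ (\sum_(k < K) (c - e / 2 - (b k)%:R))); last first.
    by apply: ler_sum => k _; exact: hk.
  rewrite sumrB sumr_const card_ord -mulr_natl.
  lra.
have Kp : 0 < (K%:R : R) by rewrite ltr0n.
rewrite ler_pdivlMl //; apply: le_trans hsum.
have : 2 * N%:R < e * K%:R by rewrite -ltr_pdivrMl // mulrC.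
nra.
Qed.

End Core2.

Section Transpose.
Variables (R : realType) (X Y : choiceType) (g : X -> Y -> bool).
Variables (A : set X) (B : set Y).
Definition gT : Y -> X -> bool := fun y x => ~~ g x y.

Lemma rpay_T (ys : seq (R * Y)) x : wsum ys = 1 -> rpay gT ys x = 1 - cpay g x ys.
Proof.
move=> w1; rewrite -w1 /rpay /cpay /wsum -sumrB; apply: eq_bigr => p _.
by rewrite /gT; case: (g x p.2); rewrite /= ?mulr0 ?mulr1 ?subr0 ?subrr.
Qed.

Lemma cpay_T (xs : seq (R * X)) y : wsum xs = 1 -> cpay gT y xs = 1 - rpay g xs y.
Proof.
move=> w1; rewrite -w1 /rpay /cpay /wsum -sumrB; apply: eq_bigr => p _.
by rewrite /gT; case: (g p.2 y); rewrite /= ?mulr0 ?mulr1 ?subr0 ?subrr.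
Qed.

Lemma Plow_T (c : R) : Plow g A B c -> Pup gT B A (1 - c).
Proof.
move=> hP xs vxs d d0; have [y [By hy]] := hP xs vxs d d0.
exists y; split => //; case: vxs => _ w1; rewrite cpay_T //; lra.
Qed.

Lemma Pup_T (c : R) : Pup g A B c -> Plow gT B A (1 - c).
Proof.
move=> hP ys vys d d0; have [x [Ax hx]] := hP ys vys d d0.
exists x; split => //; case: vys => _ w1; rewrite rpay_T //; lra.
Qed.

Lemma LCert_T (c : R) : LCert gT B A c -> UCert g A B (1 - c).
Proof.
move=> hL e e0; have [ys [vys hys]] := hL e e0.
exists ys; split => // x Ax; have := hys x Ax.
case: vys => _ w1; rewrite rpay_T //; lra.
Qed.

Lemma UCert_T (c : R) : UCert gT B A c -> LCert g A B (1 - c).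
Proof.
move=> hU e e0; have [xs [vxs hxs]] := hU e e0.
exists xs; split => // y By; have := hxs y By.
case: vxs => _ w1; rewrite cpay_T //; lra.
Qed.

End Transpose.

Lemma card_size (X : choiceType) (Z : set X) (N : nat) (zs : seq X) :
  (Z #<= `I_N)%card -> uniq zs -> (forall z, z \in zs -> Z z) -> (size zs <= N)%N.
Proof.
move=> hZ uz hz.
have finZ : finite_set Z by apply/finite_set_leP; exists N.
apply: leq_trans (geq_card_fset_set hZ).
apply: uniq_leq_size => // z zin.
by rewrite in_fset_set // inE; exact: hz.
Qed.


Section Esum.
Variable R : realType.
Local Open Scope ereal_scope.

Lemma esumZl (Z : choiceType) (I : set Z) (r : R) (a : Z -> \bar R) :
  (0 <= r)%R -> (forall z, 0 <= a z) ->
  \esum_(i in I) (r%:E * a i) = r%:E * \esum_(i in I) a i.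
Proof.
move=> r0 a0; rewrite /esum -ereal_supZl //; last first.
  by apply/set0P; exists 0; exists set0; [exact: fsets_set0 | rewrite fsbig_set0].
congr ereal_sup; apply/seteqP; split => x /=.
  move=> [F hF <-]; exists (\sum_(i \in F) a i); first by exists F.
  case: hF => finF _; rewrite !fsbig_finite //.
  by rewrite ge0_sume_distrr //.
move=> [y [F hF <-] <-]; exists F => //.
case: hF => finF _; rewrite !fsbig_finite //.
by rewrite ge0_sume_distrr //.
Qed.

Definition mixf (Z : choiceType) (zs : seq (R * Z)) (z : Z) : R :=
  (\sum_(p <- zs) p.1 * (p.2 == z)%:R)%R.

Lemma esum_fin (Z : choiceType) (zs : seq (R * Z)) (h : Z -> R) :
  (forall p, p \in zs -> 0 <= p.1)%R -> (forall z, 0 <= h z)%R ->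
  \esum_(z in [set: Z]) (mixf zs z * h z)%:E = (\sum_(p <- zs) p.1 * h p.2)%:E.
Proof.
move=> zs0 h0.
have -> : (fun z => (mixf zs z * h z)%:E) =
    (fun z => \sum_(p <- zs | p \in zs) (p.1 * (p.2 == z)%:R * h z)%:E).
  apply: funext => z; rewrite -big_seq sumEFin /mixf mulr_suml.
  by [].
rewrite esum_sum; last first.
  move=> z p _ pin; rewrite lee_fin; apply: mulr_ge0; last exact: h0.
  by apply: mulr_ge0; [exact: zs0 | exact: ler0n].
rewrite -sumEFin [in RHS]big_seq; apply: eq_bigr => p pin.
rewrite (_ : (fun z => _) = (fun z => if z \in [set p.2] then (p.1 * h z)%:E else 0)).
  by rewrite -esum_mkcond esum_set1 // lee_fin mulr_ge0 // ?zs0.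
apply: funext => z.
case: (eqVneq p.2 z) => [<-|ne]; first by rewrite mulr1 mem_set.
rewrite memNset; first by rewrite mulr0 mul0r.
by move=> /= ez; move/eqP: ne; rewrite ez.
Qed.

End Esum.

Section Mixed.
Variable R : realType.
Local Open Scope ereal_scope.

Lemma mixf_zero (Z : choiceType) (C : set Z) (zs : seq (R * Z)) z :
  validm C zs -> ~ (z \in map snd zs) -> mixf zs z = 0%R.
Proof.
move=> _ nz; rewrite /mixf big_seq; apply: big1 => p pin.
case: (eqVneq p.2 z) => [ez|_]; last by rewrite mulr0.
by exfalso; apply: nz; apply/mapP; exists p.
Qed.

Lemma mixf_mixed (Z : choiceType) (C : set Z) (zs : seq (R * Z)) :
  validm C zs -> is_mixed C (mixf zs).
Proof.
move=> vz; have [h1 h2] := vz.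
have supp : forall z, mixf zs z != 0%R -> z \in map snd zs.
  move=> z nz; apply/negPn/negP => nin; move/negP: nz; apply.
  by rewrite (mixf_zero vz (elimN idP nin)).
split.
- move=> z; rewrite /mixf big_seq; apply: sumr_ge0 => p pin.
  by apply: mulr_ge0; [case: (h1 p pin) | exact: ler0n].
- move=> z /supp /mapP [p pin ->]; by case: (h1 p pin).
- apply: finite_set_countable; apply: (sub_finite_set _ (finite_seq (map snd zs))).
  by move=> z /= /supp.
- rewrite (_ : (fun x => _) = (fun x => (mixf zs x * 1)%:E)); last first.
    by apply: funext => x; rewrite mulr1.
  rewrite esum_fin //; last by move=> p pin; case: (h1 p pin).
  by under eq_bigr do rewrite mulr1; rewrite -/(wsum zs) h2.
Qed.

Variables (S T : choiceType) (pi : S -> T -> bool).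

Lemma setXTT : [set: S * T] = [set: S] `*`` (fun _ => [set: T]).
Proof. by apply/seteqP; split => -[s t]. Qed.

Lemma mixpay_rows (p : S -> R) (q : T -> R) :
  (forall s, 0 <= p s)%R -> (forall t, 0 <= q t)%R ->
  mixpay pi p q = \esum_(s in [set: S]) ((p s)%:E * \esum_(t in [set: T]) (q t * (pi s t)%:R)%:E).
Proof.
move=> p0 q0; rewrite /mixpay setXTT.
rewrite -(@esum_esum R S T [set: S] (fun _ => [set: T]) (fun s t => (p s * q t * (pi s t)%:R)%:E)); last first.
  move=> s t _ _; rewrite lee_fin; apply: mulr_ge0; last exact: ler0n.
  exact: mulr_ge0.
apply: eq_esum => s _; rewrite -esumZl //; last first.
  by move=> t; rewrite lee_fin; apply: mulr_ge0; [exact: q0 | exact: ler0n].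
by apply: eq_esum => t _; rewrite -EFinM mulrA.
Qed.

Lemma mixpay_cols (p : S -> R) (q : T -> R) :
  (forall s, 0 <= p s)%R -> (forall t, 0 <= q t)%R ->
  mixpay pi p q = \esum_(t in [set: T]) ((q t)%:E * \esum_(s in [set: S]) (p s * (pi s t)%:R)%:E).
Proof.
move=> p0 q0; rewrite /mixpay.
rewrite (reindex_esum [set: T * S] [set: S * T] (fun ts => (ts.2, ts.1))); last first.
  split.
  - by move=> ? ?.
  - by move=> [t1 s1] [t2 s2] _ _ [] -> ->.
  - by move=> [s t] _; exists (t, s).
have -> : [set: T * S] = [set: T] `*`` (fun _ => [set: S]) by apply/seteqP; split => -[].
rewrite -(@esum_esum R T S [set: T] (fun _ => [set: S]) (fun t s => (p s * q t * (pi s t)%:R)%:E)); last first.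
  move=> t s _ _; rewrite lee_fin; apply: mulr_ge0; last exact: ler0n.
  exact: mulr_ge0.
apply: eq_esum => t _; rewrite -esumZl //; last first.
  by move=> s; rewrite lee_fin; apply: mulr_ge0; [exact: p0 | exact: ler0n].
by apply: eq_esum => s _ /=; rewrite -EFinM mulrCA mulrA.
Qed.

End Mixed.

Section Bounds.
Variable R : realType.
Local Open Scope ereal_scope.

Lemma esum_pf_le (Z : choiceType) (C : set Z) (p : Z -> R) (f : Z -> \bar R) (c : R) :
  is_mixed C p -> (forall z, 0 <= f z) -> (forall z, C z -> f z <= c%:E) -> (0 <= c)%R ->
  \esum_(z in [set: Z]) ((p z)%:E * f z) <= c%:E.
Proof.
move=> [p0 pC _ p1] f0 fc c0.
apply: (@le_trans _ _ (\esum_(z in [set: Z]) (c%:E * (p z)%:E))).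
  apply: le_esum => z _.
  case: (eqVneq (p z) 0%R) => [->|nz]; first by rewrite !mul0e mule0.
  rewrite [leRHS]muleC; apply: lee_wpmul2l; first by rewrite lee_fin.
  exact: fc (pC z nz).
rewrite esumZl // ?p1 ?mule1 // => z; by rewrite lee_fin.
Qed.

Lemma esum_pf_ge (Z : choiceType) (C : set Z) (p : Z -> R) (f : Z -> \bar R) (c : R) :
  is_mixed C p -> (forall z, 0 <= f z) -> (forall z, C z -> c%:E <= f z) ->
  c%:E <= \esum_(z in [set: Z]) ((p z)%:E * f z).
Proof.
move=> [p0 pC _ p1] f0 fc.
case: (leP c 0%R) => c0.
  apply: le_trans (_ : 0 <= _); first by rewrite lee_fin.
  apply: esum_ge0 => z _; apply: mule_ge0 => //; by rewrite lee_fin.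
apply: (@le_trans _ _ (\esum_(z in [set: Z]) (c%:E * (p z)%:E))).
  by rewrite esumZl ?p1 ?mule1 // ?ltW // => z; rewrite lee_fin.
apply: le_esum => z _.
case: (eqVneq (p z) 0%R) => [->|nz]; first by rewrite !mul0e mule0.
rewrite [leLHS]muleC; apply: lee_wpmul2l; first by rewrite lee_fin.
exact: fc (pC z nz).
Qed.

End Bounds.

Section Value.
Variables (R : realType) (S T : choiceType) (pi : S -> T -> bool).
Variables (A : set S) (B : set T).
Hypotheses (A0 : A !=set0) (B0 : B !=set0).
Local Open Scope ereal_scope.

Let MA := [set p : S -> R | is_mixed A p].
Let MB := [set q : T -> R | is_mixed B q].
Definition Low := ereal_sup [set ereal_inf [set mixpay pi p q | q in MB] | p in MA].
Definition Up := ereal_inf [set ereal_sup [set mixpay pi p q | p in MA] | q in MB].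

Lemma colv_le1 (q : T -> R) s : is_mixed B q ->
  \esum_(t in [set: T]) (q t * (pi s t)%:R)%:E <= 1.
Proof.
move=> mq; under eq_esum do rewrite EFinM.
apply: (esum_pf_le mq) => // t _; rewrite lee_fin; case: (pi s t) => //=; exact: ler01.
Qed.

Lemma colv_ge0 (q : T -> R) s : is_mixed B q ->
  0 <= \esum_(t in [set: T]) (q t * (pi s t)%:R)%:E.
Proof.
move=> [q0 _ _ _]; apply: (@esum_ge0 R) => t _; rewrite lee_fin.
by apply: mulr_ge0; [exact: q0 | exact: ler0n].
Qed.

Lemma M_ge0 (p : S -> R) (q : T -> R) : is_mixed A p -> is_mixed B q -> 0 <= mixpay pi p q.
Proof.
move=> [p0 _ _ _] [q0 _ _ _]; apply: (@esum_ge0 R) => st _; rewrite lee_fin.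
by apply: mulr_ge0; [apply: mulr_ge0 | exact: ler0n].
Qed.

Lemma M_le1 (p : S -> R) (q : T -> R) : is_mixed A p -> is_mixed B q -> mixpay pi p q <= 1.
Proof.
move=> mp mq; have [p0 _ _ _] := mp; have [q0 _ _ _] := mq.
rewrite mixpay_rows //; apply: (esum_pf_le mp) => //.
- by move=> s; exact: colv_ge0.
- by move=> s _; exact: colv_le1.
Qed.

Lemma MA_pure : exists p, MA p.
Proof.
case: A0 => a Aa; exists (mixf (pure R a)); apply: mixf_mixed.
exact: validm_pure.
Qed.

Lemma MB_pure : exists q, MB q.
Proof.
case: B0 => b Bb; exists (mixf (pure R b)); apply: mixf_mixed.
exact: validm_pure.
Qed.

Lemma Low_ge0 : 0 <= Low.
Proof.
have [p mp] := MA_pure.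
apply: le_trans (ereal_sup_ubound _); last by exists p.
apply: le_ereal_inf_tmp => _ [q mq <-]; exact: M_ge0.
Qed.

Lemma Up_le1 : Up <= 1.
Proof.
have [q mq] := MB_pure.
have h : Up <= ereal_sup [set mixpay pi p q | p in MA].
  by apply: ereal_inf_lbound; exists q.
apply: le_trans h _.
apply: ge_ereal_sup => _ [p mp <-]; exact: M_le1.
Qed.

Lemma Low_le_Up : Low <= Up.
Proof.
apply: ge_ereal_sup => _ [p mp <-].
apply: le_ereal_inf_tmp => _ [q mq <-].
apply: (@le_trans _ _ (mixpay pi p q)).
  by apply: ereal_inf_lbound; exists q.
by apply: ereal_sup_ubound; exists p.
Qed.

Lemma Low_fin : (fine Low)%:E = Low.
Proof.
apply: fineK; rewrite ge0_fin_numE ?Low_ge0 //.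
apply: le_lt_trans Low_le_Up _; apply: le_lt_trans Up_le1 _; exact: ltey.
Qed.

Lemma Up_fin : (fine Up)%:E = Up.
Proof.
apply: fineK; rewrite ge0_fin_numE; last first.
  exact: le_trans Low_ge0 Low_le_Up.
apply: le_lt_trans Up_le1 _; exact: ltey.
Qed.

Lemma fineLow_ge0 : (0 <= fine Low)%R.
Proof. by rewrite -lee_fin Low_fin Low_ge0. Qed.

Lemma fineUp_le1 : (fine Up <= 1)%R.
Proof. by rewrite -lee_fin Up_fin Up_le1. Qed.


Lemma rowv_fin (xs : seq (R * S)) t : validm A xs ->
  \esum_(s in [set: S]) (mixf xs s * (pi s t)%:R)%:E = (rpay pi xs t)%:E.
Proof.
by move=> [h _]; rewrite esum_fin // => p pin; case: (h p pin).
Qed.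

Lemma colv_fin (ys : seq (R * T)) s : validm B ys ->
  \esum_(t in [set: T]) (mixf ys t * (pi s t)%:R)%:E = (cpay pi s ys)%:E.
Proof.
by move=> [h _]; rewrite esum_fin // => p pin; case: (h p pin).
Qed.

Lemma bridge_Plow : Plow pi A B (fine Low).
Proof.
move=> xs vxs d d0.
have mp := mixf_mixed vxs.
have h1 : ereal_inf [set mixpay pi (mixf xs) q | q in MB] <= Low.
  by apply: ereal_sup_ubound; exists (mixf xs).
have h2 : ereal_inf [set mixpay pi (mixf xs) q | q in MB] < (fine Low + d)%:E.
  apply: le_lt_trans h1 _; rewrite -Low_fin lte_fin; lra.
have [_ [q mq <-] hq] := ereal_inf_lt h2.
case: (pselect (exists t, B t /\ (rpay pi xs t <= fine Low + d)%R)) => // nh.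
exfalso; move: hq; apply/negP; rewrite -leNgt.
have [p0 _ _ _] := mp; have [q0 _ _ _] := mq.
rewrite mixpay_cols //.
under eq_esum do rewrite rowv_fin //.
apply: (esum_pf_ge mq).
  by move=> t; rewrite lee_fin; apply: rpay_ge0 vxs.
move=> t Bt; rewrite lee_fin; apply: ltW; rewrite ltNge; apply/negP => ht.
by apply: nh; exists t.
Qed.

Lemma bridge_Pup : Pup pi A B (fine Up).
Proof.
move=> ys vys d d0.
have mq := mixf_mixed vys.
have h1 : Up <= ereal_sup [set mixpay pi p (mixf ys) | p in MA].
  by apply: ereal_inf_lbound; exists (mixf ys).
have h2 : (fine Up - d)%:E < ereal_sup [set mixpay pi p (mixf ys) | p in MA].
  apply: lt_le_trans h1; rewrite -Up_fin lte_fin; lra.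
have [_ [p mp <-] hp] := ereal_sup_gt h2.
case: (pselect (exists s, A s /\ (fine Up - d <= cpay pi s ys)%R)) => // nh.
exfalso; move: hp; apply/negP; rewrite -leNgt.
have [p0 _ _ _] := mp; have [q0 _ _ _] := mq.
rewrite mixpay_rows //.
under eq_esum do rewrite colv_fin //.
apply: (esum_pf_le mp).
- by move=> s; rewrite lee_fin; apply: cpay_ge0 vys.
- move=> s As; rewrite lee_fin; apply: ltW; rewrite ltNge; apply/negP => hs.
  by apply: nh; exists s.
- case: A0 => a Aa; case: (pselect (fine Up - d <= 0)%R) => [hn|hn].
    by exfalso; apply: nh; exists a; split => //; apply: le_trans hn (cpay_ge0 _ _ vys).
  by rewrite ltW // ltNge; apply/negP.
Qed.

Lemma bridge_UCert c : UCert pi A B c -> Up <= c%:E.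
Proof.
move=> hU; apply/lee_addgt0Pr => e e0.
have [ys [vys hys]] := hU e e0.
have mq := mixf_mixed vys.
have h1 : Up <= ereal_sup [set mixpay pi p (mixf ys) | p in MA].
  by apply: ereal_inf_lbound; exists (mixf ys).
apply: le_trans h1 _; apply: ge_ereal_sup => _ [p mp <-].
have [p0 _ _ _] := mp; have [q0 _ _ _] := mq.
rewrite mixpay_rows // -EFinD.
under eq_esum do rewrite colv_fin //.
apply: (esum_pf_le mp).
- by move=> s; rewrite lee_fin; apply: cpay_ge0 vys.
- by move=> s As; rewrite lee_fin; apply: hys.
- case: A0 => a Aa; apply: le_trans (hys a Aa); exact: cpay_ge0 vys.
Qed.

Lemma bridge_LCert c : LCert pi A B c -> c%:E <= Low.
Proof.
move=> hL; apply/lee_subgt0Pr => e e0.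
have [xs [vxs hxs]] := hL e e0.
have mp := mixf_mixed vxs.
have h1 : ereal_inf [set mixpay pi (mixf xs) q | q in MB] <= Low.
  by apply: ereal_sup_ubound; exists (mixf xs).
apply: le_trans h1; apply: le_ereal_inf_tmp => _ [q mq <-].
have [p0 _ _ _] := mp; have [q0 _ _ _] := mq.
rewrite mixpay_cols // -EFinB.
under eq_esum do rewrite rowv_fin //.
apply: (esum_pf_ge mq).
- by move=> t; rewrite lee_fin; apply: rpay_ge0 vxs.
- by move=> t Bt; rewrite lee_fin; apply: hxs.
Qed.

Lemma mm_of_UCert : UCert pi A B (fine Low) -> minimax_on R pi A B.
Proof.
move=> hU; rewrite /minimax_on -/Low -/Up; apply/eqP; rewrite eq_le Low_le_Up /=.
by rewrite -Low_fin; apply: bridge_UCert.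
Qed.

Lemma mm_of_LCert : LCert pi A B (fine Up) -> minimax_on R pi A B.
Proof.
move=> hL; rewrite /minimax_on -/Low -/Up; apply/eqP; rewrite eq_le Low_le_Up /=.
by rewrite -Up_fin; apply: bridge_LCert.
Qed.

End Value.

End Aux.
Import Aux.
Unset Implicit Arguments. Set Strict Implicit. Set Printing Implicit Defensive.
Import Order.TTheory GRing.Theory Num.Theory.
Local Open Scope classical_set_scope.
Local Open Scope card_scope.

Theorem corollary3p2 (R : realType) (S T : choiceType) (pi : S -> T -> bool) :
  [set: S] !=set0 -> [set: T] !=set0 ->
  (   (* (1) all but finitely many rows contain finitely many 0 entries *)
      finite_set [set s | ~ finite_set [set t | pi s t = false]]
      (* (2) all but finitely many rows contain at most N entries equal to 1 *)
   \/ (exists N : nat, finite_set [set s | ~ ([set t | pi s t = true] #<= `I_N)])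
      (* (3) all but finitely many columns contain at most N entries equal to 0 *)
   \/ (exists N : nat, finite_set [set t | ~ ([set s | pi s t = false] #<= `I_N)])
      (* (4) all but finitely many columns contain finitely many 1 entries *)
   \/ finite_set [set t | ~ finite_set [set s | pi s t = true]]) ->
  totally_minimax R pi.
Proof.
move=> _ _ H A B A0 B0.
case: H => [H1|[[N H2]|[[N H3]|H4]]].
-
  have [fs hfs] := (finite_seqP _).1 H1.
  apply: mm_of_LCert => //.
  have hc : (0 <= 1 - fine (Up R pi A B))%R.
    by rewrite subr_ge0; apply: fineUp_le1.
  have hfin : forall s, A s -> s \notin fs -> finite_set [set t | B t /\ gT pi t s].
    move=> s As sfs.
    have : ~ [set` fs] s by move=> /= h; move/negP: sfs; apply.
    rewrite -hfs /= => /contrapT fin.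
    apply: sub_finite_set fin => t [_ /=]; rewrite /gT; by case: (pi s t).
  have hU := @coreI R T S (gT pi) B A fs _ B0 A0 hc hfin (Pup_T (@bridge_Pup R S T pi A B A0 B0)).
  have := UCert_T hU.
  by have -> : (1 - (1 - fine (Up R pi A B)) = fine (Up R pi A B))%R by ring.
-
  have [fs hfs] := (finite_seqP _).1 H2.
  apply: mm_of_UCert => //.
  have hc : (1 - fine (Low R pi A B) <= 1)%R.
    by rewrite lerBlDr lerDl; apply: fineLow_ge0.
  have hN : forall s, A s -> s \notin fs -> forall zs : seq T, uniq zs ->
      (forall z, z \in zs -> B z /\ gT pi z s = false) -> (size zs <= N)%N.
    move=> s As sfs zs uz hz.
    have : ~ [set` fs] s by move=> /= h; move/negP: sfs; apply.
    rewrite -hfs /= => /contrapT card.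
    apply: (card_size card uz) => z zin; have [_ /=] := hz z zin.
    by rewrite /gT; case: (pi s z).
  have hL := @coreII R T S (gT pi) B A fs N _ B0 A0 hc hN (Plow_T (@bridge_Plow R S T pi A B A0 B0)).
  have := LCert_T hL.
  by have -> : (1 - (1 - fine (Low R pi A B)) = fine (Low R pi A B))%R by ring.
-
  have [fs hfs] := (finite_seqP _).1 H3.
  apply: mm_of_LCert => //.
  apply: (@coreII R S T pi A B fs N _ A0 B0 (@fineUp_le1 R S T pi A B A0 B0)); last first.
    exact: bridge_Pup.
  move=> t Bt tfs zs uz hz.
  have : ~ [set` fs] t by move=> /= h; move/negP: tfs; apply.
  rewrite -hfs /= => /contrapT card.
  by apply: (card_size card uz) => z zin; have [_ /=] := hz z zin.
-
  have [fs hfs] := (finite_seqP _).1 H4.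
  apply: mm_of_UCert => //.
  apply: (@coreI R S T pi A B fs _ A0 B0 (@fineLow_ge0 R S T pi A B A0 B0)); last first.
    exact: bridge_Plow.
  move=> t Bt tfs.
  have : ~ [set` fs] t by move=> /= h; move/negP: tfs; apply.
  rewrite -hfs /= => /contrapT fin.
  by apply: sub_finite_set fin => s [_ /=].
Qed.
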